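(* (i) Let $q$ be a power of an odd prime and let $\mathfrak{C}/\mathbb{F}_q$ be the genus $2$ hyperelliptic curve $y^2=x^5+x^3+tx$ with $t\in\mathbb{F}_q\setminus\{0,1/4,9/100\}$. If $4\mid q-1$ and $t$ has a fourth root $t^{1/4}\in\mathbb{F}_q$, then $\mathrm{Aut}(\mathfrak{C}/\mathbb{F}_q)\simeq D_8$. (ii) Let $q$ be a power of an odd prime $p\neq 3$ and let $\mathfrak{C}/\mathbb{F}_q$ be the genus $2$ hyperelliptic curve $y^2=x^6+x^3+t$ with $t\in\mathbb{F}_q\setminus\{0,1/4,-1/50\}$. If $3\mid q-1$ and $t$ has a sixth root $t^{1/6}\in\mathbb{F}_q$, then $\mathrm{Aut}(\mathfrak{C}/\mathbb{F}_q)\simeq D_{12}$.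
   Context: For a genus $2$ curve $\mathfrak{C}:y^2=f(x)$ over $\mathbb{F}_q$ ($q$ odd), automorphisms of $\mathfrak{C}$ over $\overline{\mathbb{F}}_q$ correspond to matrices $M=\begin{pmatrix}a&b\\c&d\end{pmatrix}\in\mathrm{GL}_2(\overline{\mathbb{F}}_q)$ acting by $x\mapsto \frac{ax+b}{cx+d}$, $y\mapsto \frac{(ad-bc)y}{(cx+d)^3}$ (and preserving the curve). $\mathrm{Aut}(\mathfrak{C})$ denotes the full automorphism group over $\overline{\mathbb{F}}_q$ (including the hyperelliptic involution $y\mapsto -y$, corresponding to $-I$), and $\mathrm{Aut}(\mathfrak{C}/\mathbb{F}_q)$ its subgroup of automorphisms defined over $\mathbb{F}_q$, i.e. whose matrix has entries in $\mathbb{F}_q$. $D_n$ denotes the dihedral group of order $n$. *)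

(* Defs.v *)
From HB Require Import structures.
From mathcomp Require Import all_boot all_order all_algebra all_fingroup all_solvable all_field.
Set Implicit Arguments. Unset Strict Implicit. Unset Printing Implicit Defensive.
Import GRing.Theory.
Local Open Scope ring_scope.

(* Genus 2 curve y^2 = f(x) with deg f <= 6.  A matrix M = [[a,b],[c,d]]
   acts by x |-> (a x + b)/(c x + d), y |-> det(M) y / (c x + d)^3.
   This preserves the curve iff
     (c x + d)^6 f((a x + b)/(c x + d)) = det(M)^2 f(x),
   where the left-hand side is the polynomial below. *)
Definition act_poly (F : fieldType) (M : 'M[F]_2) (f : {poly F}) : {poly F} :=
  \sum_(i < 7) f`_i *: (('X * (M 0 0)%:P + (M 0 1)%:P) ^+ i
                       * ('X * (M 1 0)%:P + (M 1 1)%:P) ^+ (6 - i)).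

Definition aut_set (F : finFieldType) (f : {poly F}) : {set {'GL_2[F]}} :=
  [set u : {'GL_2[F]} | act_poly (GLval u) f == (\det (GLval u)) ^+ 2 *: f].

(* Main.v *)
Require Import Defs.
From HB Require Import structures.
From mathcomp Require Import all_boot all_order all_algebra all_fingroup all_solvable all_field.
From mathcomp Require Import ring.
Import GRing.Theory.
Local Open Scope ring_scope.
Set Implicit Arguments. Unset Strict Implicit. Unset Printing Implicit Defensive.

Lemma eq0_by (F : zmodType) (X Y : F) : Y = 0 -> X = Y -> X = 0.
Proof. by move=> -> ->. Qed.

Lemma mul0_l (F : fieldType) (x y : F) : x * y = 0 -> y != 0 -> x = 0.
Proof. by move/eqP; rewrite mulf_eq0 => /orP[/eqP//|/eqP->]; rewrite eqxx. Qed.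

Lemma mul0_r (F : fieldType) (x y : F) : x * y = 0 -> x != 0 -> y = 0.
Proof. by move/eqP; rewrite mulf_eq0 => /orP[/eqP->|/eqP//]; rewrite eqxx. Qed.

Lemma no35 (F : comNzRingType) : 5%:R = 0 :> F -> 3%:R = 0 :> F -> False.
Proof.
move=> h5 h3; have : (1 : F) = 2%:R * 3%:R - 5%:R by ring.
by rewrite h5 h3 mulr0 subr0; apply/eqP; rewrite oner_eq0.
Qed.

Ltac nz := repeat (apply: mulf_neq0 || apply: expf_neq0); try done.
Definition e1 {F : nzRingType} (a b c d t : F) : seq F :=
 [:: b^+5*d + b^+3*d^+3 + b*d^+5*t ;
   5%:R*a*b^+4*d + 3%:R*a*b^+2*d^+3 + a*d^+5*t + b^+5*c + 3%:R*b^+3*c*d^+2 + 5%:R*b*c*d^+4*t ;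
   10%:R*a^+2*b^+3*d + 3%:R*a^+2*b*d^+3 + 5%:R*a*b^+4*c + 9%:R*a*b^+2*c*d^+2 + 5%:R*a*c*d^+4*t + 3%:R*b^+3*c^+2*d + 10%:R*b*c^+2*d^+3*t ;
   10%:R*a^+3*b^+2*d + a^+3*d^+3 + 10%:R*a^+2*b^+3*c + 9%:R*a^+2*b*c*d^+2 + 9%:R*a*b^+2*c^+2*d + 10%:R*a*c^+2*d^+3*t + b^+3*c^+3 + 10%:R*b*c^+3*d^+2*t ;
   5%:R*a^+4*b*d + 10%:R*a^+3*b^+2*c + 3%:R*a^+3*c*d^+2 + 9%:R*a^+2*b*c^+2*d + 3%:R*a*b^+2*c^+3 + 10%:R*a*c^+3*d^+2*t + 5%:R*b*c^+4*d*t ;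
   a^+5*d + 5%:R*a^+4*b*c + 3%:R*a^+3*c^+2*d + 3%:R*a^+2*b*c^+3 + 5%:R*a*c^+4*d*t + b*c^+5*t ;
   a^+5*c + a^+3*c^+3 + a*c^+5*t ].

Definition Sform {F : fieldType} (n : nat) (s : F) (M : 'M[F]_2) : Prop :=
  (M 0 1 = 0 /\ M 1 0 = 0 /\ M 0 0 * M 1 1 = 1 /\ (M 0 0) ^+ n = 1) \/
  (M 0 0 = 0 /\ M 1 1 = 0 /\ M 0 1 * M 1 0 = 1 /\ (M 1 0 * s) ^+ n = 1).

Lemma core_i (F : fieldType) (t s a b c d : F) :
  2%:R != 0 :> F -> t != 0 -> 4%:R * t - 1 != 0 -> 100%:R * t - 9%:R != 0 ->
  s ^+ 4 = t -> a * d - b * c != 0 ->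
  (forall j, (e1 a b c d t)`_j = (a * d - b * c) ^+ 2 * [:: 0; t; 0; 1; 0; 1; 0]`_j) ->
  (b = 0 /\ c = 0 /\ a * d = 1 /\ a ^+ 4 = 1) \/
  (a = 0 /\ d = 0 /\ b * c = 1 /\ (c * s) ^+ 4 = 1).
Proof.
move=> h2 ht ht4 ht9 hs hD E.
have E0 := E 0%N; have E1 := E 1%N; have E2 := E 2%N; have E3 := E 3%N.
have E4 := E 4%N; have E5 := E 5%N; have E6 := E 6%N; clear E.
rewrite /= ?mulr0 ?mulr1 in E0 E1 E2 E3 E4 E5 E6.
move/eqP: E1; rewrite -subr_eq0 => /eqP E1.
move/eqP: E3; rewrite -subr_eq0 => /eqP E3.
move/eqP: E5; rewrite -subr_eq0 => /eqP E5.
have [c0|cn0] := eqVneq c 0.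
  subst c; rewrite mulr0 subr0 in hD.
  have an0 : a != 0 by apply: contraNneq hD => ->; rewrite mul0r.
  have dn0 : d != 0 by apply: contraNneq hD => ->; rewrite mulr0.
  have [b0|bn0] := eqVneq b 0; last first.
    exfalso.
    have f5 : 5%:R * (a^+4 * b * d) = 0 by apply: (eq0_by E4); ring.
    have h5 : 5%:R = 0 :> F by apply: (mul0_l f5); nz.
    have f3 : (a^+2 * b * d) * (2%:R * 5%:R * b^+2 + 3%:R * d^+2) = 0.
      by apply: (eq0_by E2); ring.
    have := mul0_r f3; rewrite h5 !mulr0 !mul0r add0r => f3'.
    have h3 : 3%:R = 0 :> F by apply: (mul0_l (f3' _)); nz.
    exact: no35 h5 h3.
  subst b; left; split=> //; split=> //.
  have had : a * d = 1.
    have f : (a * d) ^+ 2 * (a * d - 1) = 0 by apply: (eq0_by E3); ring.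
    by apply/eqP; rewrite -subr_eq0; apply/eqP; apply: (mul0_r f); nz.
  split=> //.
  have f : (a ^+ 2 * d) * (a ^+ 3 - d) = 0 by apply: (eq0_by E5); ring.
  have hd : d = a ^+ 3 by apply/eqP; rewrite eq_sym -subr_eq0; apply/eqP; apply: (mul0_r f); nz.
  by rewrite -had hd; ring.
have [a0|an0] := eqVneq a 0.
  subst a; rewrite mul0r sub0r oppr_eq0 in hD.
  have bn0 : b != 0 by apply: contraNneq hD => ->; rewrite mul0r.
  have [d0|dn0] := eqVneq d 0; last first.
    exfalso.
    have f5 : 5%:R * (b * c^+4 * d * t) = 0 by apply: (eq0_by E4); ring.
    have h5 : 5%:R = 0 :> F by apply: (mul0_l f5); nz.
    have f3 : (b * c^+2 * d) * (3%:R * b^+2 + 2%:R * 5%:R * d^+2 * t) = 0.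
      by apply: (eq0_by E2); ring.
    have := mul0_r f3; rewrite h5 !mulr0 !mul0r addr0 => f3'.
    have h3 : 3%:R = 0 :> F by apply: (mul0_l (f3' _)); nz.
    exact: no35 h5 h3.
  subst d; right; split=> //; split=> //.
  have hbc : b * c = 1.
    have f : (b * c) ^+ 2 * (b * c - 1) = 0 by apply: (eq0_by E3); ring.
    by apply/eqP; rewrite -subr_eq0; apply/eqP; apply: (mul0_r f); nz.
  split=> //.
  have f : (b * c ^+ 2) * (c ^+ 3 * t - b) = 0 by apply: (eq0_by E5); ring.
  have hb : b = c ^+ 3 * t by apply/eqP; rewrite eq_sym -subr_eq0; apply/eqP; apply: (mul0_r f); nz.
  by rewrite exprMn hs -hbc hb; ring.
exfalso.
have [p ha] : exists p, a = p * c by exists (a / c); rewrite divfK.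
subst a.
have pn0 : p != 0 by apply: contraNneq an0 => ->; rewrite mul0r.
have hp : p^+4 + p^+2 + t = 0.
  have f : (c^+6 * p) * (p^+4 + p^+2 + t) = 0 by apply: (eq0_by E6); ring.
  by apply: (mul0_r f); nz.
have [d0|dn0] := eqVneq d 0.
  subst d; rewrite mulr0 sub0r oppr_eq0 in hD.
  have bn0 : b != 0 by apply: contraNneq hD => ->; rewrite mul0r.
  have f5 : 5%:R * (p * c^+2 * b^+4) = 0 by apply: (eq0_by E2); ring.
  have h5 : 5%:R = 0 :> F by apply: (mul0_l f5); nz.
  have f3 : (p * c^+4 * b^+2) * (2%:R * 5%:R * p^+2 + 3%:R) = 0 by apply: (eq0_by E4); ring.
  have := mul0_r f3; rewrite h5 !mulr0 !mul0r add0r => h3.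
  by apply: (no35 h5); apply: h3; nz.
have [u hb] : exists u, b = u * d by exists (b / d); rewrite divfK.
subst b.
have hD' : c * d * (p - u) != 0 by move: hD; congr (_ != _); ring.
have pu : p - u != 0 by apply: contraNneq hD' => ->; rewrite mulr0.
have [u0|un0] := eqVneq u 0.
  subst u.
  have f5 : 5%:R * (p * c^+2 * d^+4 * t) = 0 by apply: (eq0_by E2); ring.
  have h5 : 5%:R = 0 :> F by apply: (mul0_l f5); nz.
  have f3 : (p * c^+4 * d^+2) * (3%:R * p^+2 + 2%:R * 5%:R * t) = 0 by apply: (eq0_by E4); ring.
  have := mul0_r f3; rewrite h5 !mulr0 !mul0r addr0 => f3'.
  have h3 : 3%:R = 0 :> F by apply: (mul0_l (f3' _)); nz.
  exact: no35 h5 h3.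
have hu : u^+4 + u^+2 + t = 0.
  have f : (d^+6 * u) * (u^+4 + u^+2 + t) = 0 by apply: (eq0_by E0); ring.
  by apply: (mul0_r f); nz.
have E2' : 10%:R * p^+2*u^+3 + 3%:R * p^+2*u + 5%:R * p*u^+4 + 9%:R * p*u^+2 + 5%:R * p*t + 3%:R*u^+3 + 10%:R*u*t = 0.
  have f : (c^+2 * d^+4) * (10%:R * p^+2*u^+3 + 3%:R * p^+2*u + 5%:R * p*u^+4 + 9%:R * p*u^+2 + 5%:R * p*t + 3%:R*u^+3 + 10%:R*u*t) = 0.
    by apply: (eq0_by E2); ring.
  by apply: (mul0_r f); nz.
have E4' : 5%:R * p^+4*u + 10%:R * p^+3*u^+2 + 3%:R * p^+3 + 9%:R * p^+2*u + 3%:R * p*u^+2 + 10%:R * p*t + 5%:R*u*t = 0.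
  have f : (c^+4 * d^+2) * (5%:R * p^+4*u + 10%:R * p^+3*u^+2 + 3%:R * p^+3 + 9%:R * p^+2*u + 3%:R * p*u^+2 + 10%:R * p*t + 5%:R*u*t) = 0.
    by apply: (eq0_by E4); ring.
  by apply: (mul0_r f); nz.
have f : (u - p) * ((u + p) * (u^+2 + p^+2 + 1)) = 0.
  by apply: (eq0_by (_ : (u^+4 + u^+2 + t) - (p^+4 + p^+2 + t) = 0)); [rewrite hu hp subr0 | ring].
have := mul0_r f; rewrite -oppr_eq0 opprB => /(_ pu) f'.
have ht' : t = - p^+4 - p^+2 by apply/eqP; rewrite -subr_eq0; apply/eqP; rewrite -hp; ring.
clear hs; subst t.
have [up|upn] := eqVneq (u + p) 0.
  have hu' : u = - p by apply/eqP; rewrite -subr_eq0 opprK up.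
  subst u.
  have f8 : 2%:R ^+ 3 * p ^+ 3 = 0 by apply: (eq0_by E2'); ring.
  by move: f8; apply/eqP; nz.
have hm := mul0_r f' upn.
have R1 : - 20%:R * p^+4*u - 4%:R * p^+3 - 20%:R * p^+2*u - 4%:R * p - 3%:R*u = 0.
  apply: (eq0_by E2'); rewrite -[LHS]addr0 -{1}(mulr0 (- 5%:R * p^+3 + 10%:R * p^+2*u + 5%:R * p*u^+2 + 4%:R * p + 3%:R*u)) -hm; ring.
have R2 : - 20%:R * p^+5 - 20%:R * p^+3 + 4%:R * p^+2*u - 3%:R * p = 0.
  apply: (eq0_by E4'); rewrite -[LHS]addr0 -{1}(mulr0 (10%:R * p^+3 + 3%:R * p)) -hm; ring.
set T := - p^+4 - p^+2 in ht ht4 ht9.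
have fin : p * ((4%:R * T - 1) * (100%:R * T - 9%:R)) = 0.
  have : p * ((4%:R * T - 1) * (100%:R * T - 9%:R)) =
    (20%:R * T - 3%:R) * (- 20%:R * p^+5 - 20%:R * p^+3 + 4%:R * p^+2*u - 3%:R * p)
    - 4%:R * p^+2 * (- 20%:R * p^+4*u - 4%:R * p^+3 - 20%:R * p^+2*u - 4%:R * p - 3%:R*u).
    by rewrite /T; ring.
  by move=> ->; rewrite R1 R2; ring.
by move: fin; apply/eqP; nz.
Qed.

Definition e2 {F : nzRingType} (a b c d t : F) : seq F :=
 [:: b^+6 + b^+3*d^+3 + d^+6*t ;
   6%:R*a*b^+5 + 3%:R*a*b^+2*d^+3 + 3%:R*b^+3*c*d^+2 + 6%:R*c*d^+5*t ;
   15%:R*a^+2*b^+4 + 3%:R*a^+2*b*d^+3 + 9%:R*a*b^+2*c*d^+2 + 3%:R*b^+3*c^+2*d + 15%:R*c^+2*d^+4*t ;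
   20%:R*a^+3*b^+3 + a^+3*d^+3 + 9%:R*a^+2*b*c*d^+2 + 9%:R*a*b^+2*c^+2*d + b^+3*c^+3 + 20%:R*c^+3*d^+3*t ;
   15%:R*a^+4*b^+2 + 3%:R*a^+3*c*d^+2 + 9%:R*a^+2*b*c^+2*d + 3%:R*a*b^+2*c^+3 + 15%:R*c^+4*d^+2*t ;
   6%:R*a^+5*b + 3%:R*a^+3*c^+2*d + 3%:R*a^+2*b*c^+3 + 6%:R*c^+5*d*t ;
   a^+6 + a^+3*c^+3 + c^+6*t ].

Lemma res_ii (F : fieldType) (t y : F) :
  (4%:R * y^+2 + 20%:R * y * t - y + 4%:R * t) = 0 -> (80%:R * y^+6 * t - 8%:R * y^+6 + 144%:R * y^+5 * t + 144%:R * y^+4 * t + 9%:R * y^+4 + 48%:R * y^+3 * t^+2 + 104%:R * y^+3 * t + y^+3 + 144%:R * y^+2 * t^+2 + 9%:R * y^+2 * t + 144%:R * y * t^+3 + 80%:R * t^+4 - 8%:R * t^+3) = 0 ->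
  (2%:R ^+ 16 * 5%:R ^+ 4) * (t ^+ 3 * (4%:R * t - 1) ^+ 6 * (50%:R * t + 1) ^+ 2) = 0 :> F.
Proof.
move=> hQ hP.
have hl : (- (256%:R * 1000%:R^+2) * t^+6 + (222%:R * 1000%:R^+2 + 720%:R * 1000%:R) * t^+5 - (70%:R * 1000%:R^+2 + 963%:R * 1000%:R + 200%:R) * t^+4 + (9%:R * 1000%:R^+2 + 689%:R * 1000%:R + 600%:R) * t^+3 - (456%:R * 1000%:R) * t^+2 - (3%:R * 1000%:R + 600%:R) * t + 200%:R) * y + (- (51%:R * 1000%:R^+2 + 200%:R * 1000%:R) * t^+6 + (39%:R * 1000%:R^+2 + 936%:R * 1000%:R) * t^+5 - (10%:R * 1000%:R^+2 + 700%:R * 1000%:R + 800%:R) * t^+4 + (1%:R * 1000%:R^+2 + 49%:R * 1000%:R + 600%:R) * t^+3 - (14%:R * 1000%:R + 400%:R) * t^+2 - 800%:R * t) = 0.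
  apply: (eq0_by (_ : 4%:R ^+ 5 * (80%:R * y^+6 * t - 8%:R * y^+6 + 144%:R * y^+5 * t + 144%:R * y^+4 * t + 9%:R * y^+4 + 48%:R * y^+3 * t^+2 + 104%:R * y^+3 * t + y^+3 + 144%:R * y^+2 * t^+2 + 9%:R * y^+2 * t + 144%:R * y * t^+3 + 80%:R * t^+4 - 8%:R * t^+3) - ((20%:R * 1000%:R + 480%:R) * y^+4 * t - (2%:R * 1000%:R + 48%:R) * y^+4 - (102%:R * 1000%:R + 400%:R) * y^+3 * t^+2 + (52%:R * 1000%:R + 224%:R) * y^+3 * t - 512%:R * y^+3 + (512%:R * 1000%:R) * y^+2 * t^+3 - (307%:R * 1000%:R + 200%:R) * y^+2 * t^+2 + (54%:R * 1000%:R + 528%:R) * y^+2 * t + (2%:R * 1000%:R + 176%:R) * y^+2 - (2%:R * 1000%:R^+2 + 560%:R * 1000%:R) * y * t^+4 + (1%:R * 1000%:R^+2 + 766%:R * 1000%:R + 400%:R) * y * t^+3 - (389%:R * 1000%:R + 376%:R) * y * t^+2 + (29%:R * 1000%:R + 888%:R) * y * t + 800%:R * y + (12%:R * 1000%:R^+2 + 800%:R * 1000%:R) * t^+5 - (9%:R * 1000%:R^+2 + 984%:R * 1000%:R) * t^+4 + (2%:R * 1000%:R^+2 + 695%:R * 1000%:R + 680%:R) * t^+3 - (264%:R * 1000%:R + 448%:R) * t^+2 + (3%:R * 1000%:R + 600%:R) * t + 200%:R) * (4%:R * y^+2 + 20%:R * y * t - y + 4%:R * t) = 0)).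
    by rewrite hP hQ; ring.
  ring.
apply: (eq0_by (_ : (- (256%:R * 1000%:R^+2) * t^+6 + (222%:R * 1000%:R^+2 + 720%:R * 1000%:R) * t^+5 - (70%:R * 1000%:R^+2 + 963%:R * 1000%:R + 200%:R) * t^+4 + (9%:R * 1000%:R^+2 + 689%:R * 1000%:R + 600%:R) * t^+3 - (456%:R * 1000%:R) * t^+2 - (3%:R * 1000%:R + 600%:R) * t + 200%:R) ^+ 2 * (4%:R * y^+2 + 20%:R * y * t - y + 4%:R * t) - ((- (256%:R * 1000%:R^+2) * t^+6 + (222%:R * 1000%:R^+2 + 720%:R * 1000%:R) * t^+5 - (70%:R * 1000%:R^+2 + 963%:R * 1000%:R + 200%:R) * t^+4 + (9%:R * 1000%:R^+2 + 689%:R * 1000%:R + 600%:R) * t^+3 - (456%:R * 1000%:R) * t^+2 - (3%:R * 1000%:R + 600%:R) * t + 200%:R) * y + (- (51%:R * 1000%:R^+2 + 200%:R * 1000%:R) * t^+6 + (39%:R * 1000%:R^+2 + 936%:R * 1000%:R) * t^+5 - (10%:R * 1000%:R^+2 + 700%:R * 1000%:R + 800%:R) * t^+4 + (1%:R * 1000%:R^+2 + 49%:R * 1000%:R + 600%:R) * t^+3 - (14%:R * 1000%:R + 400%:R) * t^+2 - 800%:R * t)) * (4%:R * (- (256%:R * 1000%:R^+2) * t^+6 + (222%:R * 1000%:R^+2 + 720%:R * 1000%:R) * t^+5 - (70%:R * 1000%:R^+2 + 963%:R * 1000%:R + 200%:R) * t^+4 + (9%:R * 1000%:R^+2 + 689%:R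 * 1000%:R + 600%:R) * t^+3 - (456%:R * 1000%:R) * t^+2 - (3%:R * 1000%:R + 600%:R) * t + 200%:R) * y - 4%:R * (- (51%:R * 1000%:R^+2 + 200%:R * 1000%:R) * t^+6 + (39%:R * 1000%:R^+2 + 936%:R * 1000%:R) * t^+5 - (10%:R * 1000%:R^+2 + 700%:R * 1000%:R + 800%:R) * t^+4 + (1%:R * 1000%:R^+2 + 49%:R * 1000%:R + 600%:R) * t^+3 - (14%:R * 1000%:R + 400%:R) * t^+2 - 800%:R * t) + (20%:R * t - 1) * (- (256%:R * 1000%:R^+2) * t^+6 + (222%:R * 1000%:R^+2 + 720%:R * 1000%:R) * t^+5 - (70%:R * 1000%:R^+2 + 963%:R * 1000%:R + 200%:R) * t^+4 + (9%:R * 1000%:R^+2 + 689%:R * 1000%:R + 600%:R) * t^+3 - (456%:R * 1000%:R) * t^+2 - (3%:R * 1000%:R + 600%:R) * t + 200%:R)) = 0)).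
  by rewrite hQ hl; ring.
ring.
Qed.

Lemma core_ii (F : fieldType) (t s a b c d : F) :
  2%:R != 0 :> F -> 3%:R != 0 :> F -> t != 0 -> 4%:R * t - 1 != 0 -> 50%:R * t + 1 != 0 ->
  s ^+ 6 = t -> a * d - b * c != 0 ->
  (forall j, (e2 a b c d t)`_j = (a * d - b * c) ^+ 2 * [:: t; 0; 0; 1; 0; 0; 1]`_j) ->
  (b = 0 /\ c = 0 /\ a * d = 1 /\ a ^+ 6 = 1) \/
  (a = 0 /\ d = 0 /\ b * c = 1 /\ (c * s) ^+ 6 = 1).
Proof.
move=> h2 h3 ht ht4 ht50 hs hD E.
have E0 := E 0%N; have E1 := E 1%N; have E2 := E 2%N; have E3 := E 3%N.
have E4 := E 4%N; have E5 := E 5%N; have E6 := E 6%N; clear E.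
rewrite /= ?mulr0 ?mulr1 in E0 E1 E2 E3 E4 E5 E6.
move/eqP: E0; rewrite -subr_eq0 => /eqP E0.
move/eqP: E3; rewrite -subr_eq0 => /eqP E3.
move/eqP: E6; rewrite -subr_eq0 => /eqP E6.
have e6 : 6%:R = 2%:R * 3%:R :> F by ring.
have h6 : 6%:R != 0 :> F by rewrite e6; nz.
have [c0|cn0] := eqVneq c 0.
  subst c; rewrite mulr0 subr0 in hD.
  have an0 : a != 0 by apply: contraNneq hD => ->; rewrite mul0r.
  have dn0 : d != 0 by apply: contraNneq hD => ->; rewrite mulr0.
  have f : (6%:R * a ^+ 5) * b = 0 by apply: (eq0_by E5); ring.
  have b0 : b = 0 by apply: (mul0_r f); nz.
  subst b; left; split=> //; split=> //.
  have had : a * d = 1.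
    have f' : (a * d) ^+ 2 * (a * d - 1) = 0 by apply: (eq0_by E3); ring.
    by apply/eqP; rewrite -subr_eq0; apply/eqP; apply: (mul0_r f'); nz.
  split=> //.
  have f' : a ^+ 6 - (a * d) ^+ 2 = 0 by apply: (eq0_by E6); ring.
  by apply/eqP; rewrite -subr_eq0; apply/eqP; rewrite -f' had; ring.
have [a0|an0] := eqVneq a 0.
  subst a; rewrite mul0r sub0r oppr_eq0 in hD.
  have bn0 : b != 0 by apply: contraNneq hD => ->; rewrite mul0r.
  have f : (6%:R * c ^+ 5 * t) * d = 0 by apply: (eq0_by E5); ring.
  have d0 : d = 0 by apply: (mul0_r f); nz.
  subst d; right; split=> //; split=> //.
  have hbc : b * c = 1.
    have f' : (b * c) ^+ 2 * (b * c - 1) = 0 by apply: (eq0_by E3); ring.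
    by apply/eqP; rewrite -subr_eq0; apply/eqP; apply: (mul0_r f'); nz.
  split=> //.
  have f' : c ^+ 6 * t - (b * c) ^+ 2 = 0 by apply: (eq0_by E6); ring.
  by rewrite exprMn hs; apply/eqP; rewrite -subr_eq0; apply/eqP; rewrite -f' hbc; ring.
exfalso.
have [p ha] : exists p, a = p * c by exists (a / c); rewrite divfK.
subst a.
have pn0 : p != 0 by apply: contraNneq an0 => ->; rewrite mul0r.
have hf : p ^+ 6 + p ^+ 3 + t != 0.
  apply/negP => /eqP h0.
  have f : c ^+ 6 * (p ^+ 6 + p ^+ 3 + t) - (p * c * d - b * c) ^+ 2 = 0 by apply: (eq0_by E6); ring.
  move/eqP: f; rewrite h0 mulr0 sub0r oppr_eq0 expf_eq0 /= => f.
  by rewrite f in hD.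
have hG : p ^+ 2 * (2%:R * p ^+ 3 + 1) * b + (p ^+ 3 + 2%:R * t) * d = 0.
  have f : (3%:R * c ^+ 5) * (p ^+ 2 * (2%:R * p ^+ 3 + 1) * b + (p ^+ 3 + 2%:R * t) * d) = 0.
    by apply: (eq0_by E5); ring.
  by apply: (mul0_r f); nz.
have [d0|dn0] := eqVneq d 0.
  subst d; rewrite mulr0 sub0r oppr_eq0 in hD.
  have bn0 : b != 0 by apply: contraNneq hD => ->; rewrite mul0r.
  have f : (p ^+ 2 * b) * (2%:R * p ^+ 3 + 1) = 0 by apply: (eq0_by hG); ring.
  have h2p := mul0_r f.
  have f' : (3%:R * p * c ^+ 4 * b ^+ 2) * (5%:R * p ^+ 3 + 1) = 0 by apply: (eq0_by E4); ring.
  have h5p := mul0_r f'.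
  have f3 : 3%:R * p ^+ 3 = (5%:R * p ^+ 3 + 1) - (2%:R * p ^+ 3 + 1) by ring.
  rewrite h5p ?h2p ?subrr in f3; try by nz.
  by move: f3; apply/eqP; nz.
have [h2p|h2pn] := eqVneq (2%:R * p ^+ 3 + 1) 0.
  have f : (p ^+ 3 + 2%:R * t) * d = 0 by apply: (eq0_by hG); rewrite h2p; ring.
  have hp3 := mul0_l f dn0.
  move: ht4; rewrite (_ : 4%:R * t - 1 = 2%:R * (p ^+ 3 + 2%:R * t) - (2%:R * p ^+ 3 + 1)); last by ring.
  by rewrite h2p hp3 mulr0 subrr eqxx.
pose W := p ^+ 2 * (2%:R * p ^+ 3 + 1).
have Wn0 : W != 0 by rewrite /W; nz.
have hWb0 : W * b + (p ^+ 3 + 2%:R * t) * d = 0 by apply: (eq0_by hG); rewrite /W; ring.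
have hWb : W * b = - ((p ^+ 3 + 2%:R * t) * d) by apply/eqP; rewrite -subr_eq0 opprK hWb0.
have E4' : 15%:R * p ^+ 4 * b ^+ 2 + 3%:R * p ^+ 3 * d ^+ 2 + 9%:R * p ^+ 2 * b * d + 3%:R * p * b ^+ 2 + 15%:R * d ^+ 2 * t = 0.
  have f : c ^+ 4 * (15%:R * p ^+ 4 * b ^+ 2 + 3%:R * p ^+ 3 * d ^+ 2 + 9%:R * p ^+ 2 * b * d + 3%:R * p * b ^+ 2 + 15%:R * d ^+ 2 * t) = 0.
    by apply: (eq0_by E4); ring.
  by apply: (mul0_r f); nz.
have E2' : 15%:R * p ^+ 2 * b ^+ 4 + 3%:R * p ^+ 2 * b * d ^+ 3 + 9%:R * p * b ^+ 2 * d ^+ 2 + 3%:R * b ^+ 3 * d + 15%:R * d ^+ 4 * t = 0.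
  have f : c ^+ 2 * (15%:R * p ^+ 2 * b ^+ 4 + 3%:R * p ^+ 2 * b * d ^+ 3 + 9%:R * p * b ^+ 2 * d ^+ 2 + 3%:R * b ^+ 3 * d + 15%:R * d ^+ 4 * t) = 0.
    by apply: (eq0_by E2); ring.
  by apply: (mul0_r f); nz.
have hQ4 : (4%:R * (p ^+ 3)^+2 + 20%:R * (p ^+ 3) * t - (p ^+ 3) + 4%:R * t) = 0.
  have h : W ^+ 2 * (15%:R * p ^+ 4 * b ^+ 2 + 3%:R * p ^+ 3 * d ^+ 2 + 9%:R * p ^+ 2 * b * d + 3%:R * p * b ^+ 2 + 15%:R * d ^+ 2 * t) =
    15%:R * p ^+ 4 * (W * b) ^+ 2 + 3%:R * p ^+ 3 * W ^+ 2 * d ^+ 2 + 9%:R * p ^+ 2 * (W * b) * (W * d) + 3%:R * p * (W * b) ^+ 2 + 15%:R * W ^+ 2 * d ^+ 2 * t.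
    by ring.
  rewrite E4' mulr0 hWb in h.
  have f : (d ^+ 2 * (3%:R * p * (p ^+ 6 + p ^+ 3 + t))) * (4%:R * (p ^+ 3)^+2 + 20%:R * (p ^+ 3) * t - (p ^+ 3) + 4%:R * t) = 0.
    by apply: (eq0_by (esym h)); rewrite /W; ring.
  by apply: (mul0_r f); nz.
have [h5|h5] := eqVneq (5%:R : F) 0.
  move/negP: hf; apply; apply/eqP.
  have -> : p ^+ 6 + p ^+ 3 + t = - (4%:R * (p ^+ 3)^+2 + 20%:R * (p ^+ 3) * t - (p ^+ 3) + 4%:R * t) + 5%:R * (p ^+ 6 + 4%:R * t * p ^+ 3 + t) by ring.
  by rewrite hQ4 h5; ring.
have hP2 : (80%:R * (p ^+ 3)^+6 * t - 8%:R * (p ^+ 3)^+6 + 144%:R * (p ^+ 3)^+5 * t + 144%:R * (p ^+ 3)^+4 * t + 9%:R * (p ^+ 3)^+4 + 48%:R * (p ^+ 3)^+3 * t^+2 + 104%:R * (p ^+ 3)^+3 * t + (p ^+ 3)^+3 + 144%:R * (p ^+ 3)^+2 * t^+2 + 9%:R * (p ^+ 3)^+2 * t + 144%:R * (p ^+ 3) * t^+3 + 80%:R * t^+4 - 8%:R * t^+3) = 0.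
  have h : W ^+ 4 * (15%:R * p ^+ 2 * b ^+ 4 + 3%:R * p ^+ 2 * b * d ^+ 3 + 9%:R * p * b ^+ 2 * d ^+ 2 + 3%:R * b ^+ 3 * d + 15%:R * d ^+ 4 * t) =
    15%:R * p ^+ 2 * (W * b) ^+ 4 + 3%:R * p ^+ 2 * (W * b) * W ^+ 3 * d ^+ 3 + 9%:R * p * (W * b) ^+ 2 * W ^+ 2 * d ^+ 2 + 3%:R * (W * b) ^+ 3 * W * d + 15%:R * W ^+ 4 * d ^+ 4 * t.
    by ring.
  rewrite E2' mulr0 hWb in h.
  have f : (d ^+ 4 * (3%:R * p ^+ 2)) * (80%:R * (p ^+ 3)^+6 * t - 8%:R * (p ^+ 3)^+6 + 144%:R * (p ^+ 3)^+5 * t + 144%:R * (p ^+ 3)^+4 * t + 9%:R * (p ^+ 3)^+4 + 48%:R * (p ^+ 3)^+3 * t^+2 + 104%:R * (p ^+ 3)^+3 * t + (p ^+ 3)^+3 + 144%:R * (p ^+ 3)^+2 * t^+2 + 9%:R * (p ^+ 3)^+2 * t + 144%:R * (p ^+ 3) * t^+3 + 80%:R * t^+4 - 8%:R * t^+3) = 0.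
    by apply: (eq0_by (esym h)); rewrite /W; ring.
  by apply: (mul0_r f); nz.
have := res_ii hQ4 hP2.
by apply/eqP; nz; rewrite subr_eq0 eq_sym; apply/eqP => /(canLR (addrK 1)) => h; move/eqP: ht50; apply; rewrite h; ring.
Qed.

Definition mk2 {R : nzRingType} (a b c d : R) : 'M[R]_2 :=
  \matrix_(i < 2, j < 2) if i == 0 then (if j == 0 then a else b) else (if j == 0 then c else d).

Lemma mx2_eta (R : comNzRingType) (M : 'M[R]_2) : M = mk2 (M 0 0) (M 0 1) (M 1 0) (M 1 1).
Proof.
apply/matrixP => i j; rewrite !mxE.
by case: i => [[|[|i]] Hi] //; case: j => [[|[|j]] Hj] //=; congr (M _ _); apply: val_inj.
Qed.

Lemma mk2E (R : comNzRingType) (a b c d : R) : ((mk2 a b c d) 0 0 = a) * ((mk2 a b c d) 0 1 = b) *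
  ((mk2 a b c d) 1 0 = c) * ((mk2 a b c d) 1 1 = d).
Proof. by rewrite !mxE. Qed.

Lemma mul_mk2 (R : comNzRingType) (a b c d e f g h : R) :
  mk2 a b c d * mk2 e f g h = mk2 (a*e+b*g) (a*f+b*h) (c*e+d*g) (c*f+d*h).
Proof.
rewrite -mulmxE; apply/matrixP => i j; rewrite !mxE !big_ord_recr big_ord0 /= !mxE /=.
by case: i => [[|[|i]] Hi] //; case: j => [[|[|j]] Hj] //=; rewrite add0r.
Qed.

Lemma det_mk2 (R : comNzRingType) (a b c d : R) : \det (mk2 a b c d) = a * d - b * c.
Proof.
rewrite (expand_det_row _ 0) !big_ord_recr big_ord0 /= add0r.
rewrite /cofactor !det_mx11 !mxE /=.
by rewrite /= expr0 expr1 mul1r mulN1r; ring.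
Qed.

Lemma det2 (R : comNzRingType) (M : 'M[R]_2) : \det M = M 0 0 * M 1 1 - M 0 1 * M 1 0.
Proof. by rewrite {1}(mx2_eta M) det_mk2. Qed.

Lemma id2 (R : comNzRingType) : (1 : 'M[R]_2) = mk2 1 0 0 1.
Proof.
apply/matrixP => i j; rewrite !mxE.
by case: i => [[|[|i]] Hi] //; case: j => [[|[|j]] Hj].
Qed.

Lemma diag_pow (R : comNzRingType) (a d : R) k : (mk2 a 0 0 d) ^+ k = mk2 (a ^+ k) 0 0 (d ^+ k).
Proof.
elim: k => [|k IH]; first by rewrite !expr0 id2.
by rewrite exprS IH mul_mk2 !exprS; congr mk2; ring.
Qed.

Lemma act1 (F : fieldType) (M : 'M[F]_2) (t : F) :
  act_poly M ('X^5 + 'X^3 + t *: 'X) = Poly (e1 (M 0 0) (M 0 1) (M 1 0) (M 1 1) t).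
Proof.
rewrite /act_poly !big_ord_recr big_ord0 /= !coefE /=.
rewrite !cons_poly_def -!mul_polyC.
ring.
Qed.

Lemma act2 (F : fieldType) (M : 'M[F]_2) (t : F) :
  act_poly M ('X^6 + 'X^3 + t%:P) = Poly (e2 (M 0 0) (M 0 1) (M 1 0) (M 1 1) t).
Proof.
rewrite /act_poly !big_ord_recr big_ord0 /= !coefE /=.
rewrite !cons_poly_def -!mul_polyC.
ring.
Qed.

Lemma f1E (F : fieldType) (t : F) : 'X^5 + 'X^3 + t *: 'X = Poly [:: 0; t; 0; 1; 0; 1; 0].
Proof. by rewrite /= !cons_poly_def -!mul_polyC; ring. Qed.

Lemma f2E (F : fieldType) (t : F) : 'X^6 + 'X^3 + t%:P = Poly [:: t; 0; 0; 1; 0; 0; 1].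
Proof. by rewrite /= !cons_poly_def; ring. Qed.

Lemma aut_setP (F : finFieldType) (f : {poly F}) (es fl : seq F) (u : {'GL_2[F]}) :
  act_poly (GLval u) f = Poly es -> f = Poly fl ->
  reflect (forall j, es`_j = (\det (GLval u)) ^+ 2 * fl`_j) (u \in aut_set f).
Proof.
move=> hA hf; rewrite inE hA hf; apply: (iffP eqP) => [H j | H].
  by have := congr1 (fun p : {poly F} => p`_j) H; rewrite /= coefZ !coef_Poly.
by apply/polyP => j; rewrite coefZ !coef_Poly.
Qed.

Lemma conv_i (F : fieldType) (t s a b c d : F) : s ^+ 4 = t ->
  (b = 0 /\ c = 0 /\ a * d = 1 /\ a ^+ 4 = 1) \/
  (a = 0 /\ d = 0 /\ b * c = 1 /\ (c * s) ^+ 4 = 1) ->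
  forall j, (e1 a b c d t)`_j = (a * d - b * c) ^+ 2 * [:: 0; t; 0; 1; 0; 1; 0]`_j.
Proof.
move=> hs [[b0 [c0 [had ha4]]] | [a0 [d0 [hbc hc4]]]] j.
- subst b c.
  have hd4 : d ^+ 4 = 1 by rewrite -(mul1r (d ^+ 4)) -{1}ha4 -exprMn had expr1n.
  case: j => [|[|[|[|[|[|[|j]]]]]]] /=; rewrite ?nth_nil ?mulr0; try ring.
  + transitivity ((a * d) * d ^+ 4 * t); first ring.
    by rewrite had hd4; ring.
  + transitivity ((a * d) ^+ 3); first ring.
    by rewrite had; ring.
  + transitivity ((a * d) * a ^+ 4); first ring.
    by rewrite had ha4; ring.
- subst a d.
  have hct : c ^+ 4 * t = 1 by rewrite -hs -exprMn.
  have hb4 : b ^+ 4 = t.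
    by rewrite -[b ^+ 4]mulr1 -hct mulrA -exprMn hbc expr1n mul1r.
  case: j => [|[|[|[|[|[|[|j]]]]]]] /=; rewrite ?nth_nil ?mulr0; try ring.
  + transitivity ((b * c) * b ^+ 4); first ring.
    by rewrite hbc hb4; ring.
  + transitivity ((b * c) ^+ 3); first ring.
    by rewrite hbc; ring.
  + transitivity ((b * c) * (c ^+ 4 * t)); first ring.
    by rewrite hbc hct; ring.
Qed.

Lemma conv_ii (F : fieldType) (t s a b c d : F) : s ^+ 6 = t ->
  (b = 0 /\ c = 0 /\ a * d = 1 /\ a ^+ 6 = 1) \/
  (a = 0 /\ d = 0 /\ b * c = 1 /\ (c * s) ^+ 6 = 1) ->
  forall j, (e2 a b c d t)`_j = (a * d - b * c) ^+ 2 * [:: t; 0; 0; 1; 0; 0; 1]`_j.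
Proof.
move=> hs [[b0 [c0 [had ha6]]] | [a0 [d0 [hbc hc6]]]] j.
- subst b c.
  have hd6 : d ^+ 6 = 1 by rewrite -(mul1r (d ^+ 6)) -{1}ha6 -exprMn had expr1n.
  case: j => [|[|[|[|[|[|[|j]]]]]]] /=; rewrite ?nth_nil ?mulr0; try ring.
  + transitivity (d ^+ 6 * t); first ring.
    by rewrite had hd6; ring.
  + transitivity ((a * d) ^+ 3); first ring.
    by rewrite had; ring.
  + transitivity (a ^+ 6); first ring.
    by rewrite had ha6; ring.
- subst a d.
  have hct : c ^+ 6 * t = 1 by rewrite -hs -exprMn.
  have hb6 : b ^+ 6 = t.
    by rewrite -[b ^+ 6]mulr1 -hct mulrA -exprMn hbc expr1n mul1r.
  case: j => [|[|[|[|[|[|[|j]]]]]]] /=; rewrite ?nth_nil ?mulr0; try ring.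
  + transitivity (b ^+ 6); first ring.
    by rewrite hbc hb6; ring.
  + transitivity ((b * c) ^+ 3); first ring.
    by rewrite hbc; ring.
  + transitivity (c ^+ 6 * t); first ring.
    by rewrite hbc hct; ring.
Qed.

Section GroupStuff.
Local Open Scope group_scope.

Lemma card_inv_gen (gT : finGroupType) (x y : gT) :
  #[x] = 2%N -> #[y] = 2%N -> x != y -> #|<<[set x; y]>>| = (#[x * y]).*2.
Proof.
move=> ox oy ne_x_y; set G := <<[set x; y]>>; pose q := #[x * y].
have q_gt1: (q > 1)%N by rewrite order_gt1 -eq_invg_mul invg_expg ox.
have homG: G \homg 'D_q.*2.
  rewrite Grp'_dihedral //; apply/existsP; exists (x, y); rewrite /= !xpair_eqE.
  by rewrite joing_idl joing_idr -{1}ox -oy !expg_order !eqxx.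
have: (#|G| %| q.*2)%N  by rewrite -card_dihedral ?card_homg.
have Gxy: <[x * y]> \subset G.
  by rewrite cycle_subG groupM ?mem_gen ?set21 ?set22.
have[k oG]: exists k, #|G| = (k * q)%N by apply/dvdnP; rewrite cardSg.
rewrite oG -mul2n dvdn_pmul2r ?order_gt0 ?dvdn_divisors // !inE /=.
case/pred2P=> [k1 | -> //]; case/negP: ne_x_y.
have cycG: cyclic G.
  apply/cyclicP; exists (x * y); apply/eqP.
  by rewrite eq_sym eqEcard Gxy oG k1 mul1n leqnn.
have: <[x]> == <[y]>.
  by rewrite (eq_subG_cyclic cycG) ?genS ?subsetUl ?subsetUr -?orderE ?ox ?oy.
by rewrite eqEcard cycle_subG /= cycle2g // !inE -order_eq1 ox; case/andP.
Qed.

Lemma order2 (gT : finGroupType) (g : gT) : g != 1 -> g ^+ 2 = 1 -> #[g] = 2%N.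
Proof.
move=> g1 g2; apply/eqP; rewrite eqn_leq dvdn_leq ?order_dvdn ?g2 //=.
by rewrite order_gt1.
Qed.

End GroupStuff.

Lemma mkGL_proof (F : finFieldType) (M : 'M[F]_2) : \det M != 0 -> M \is a GRing.unit.
Proof. by move=> H; rewrite unitmxE unitfE. Qed.

Definition mkGL {F : finFieldType} (M : 'M[F]_2) (H : \det M != 0) : {'GL_2[F]} :=
  FinRing.Unit (mkGL_proof H).

Lemma GL_inj (F : finFieldType) (u v : {'GL_2[F]}) : GLval u = GLval v -> u = v.
Proof. exact: val_inj. Qed.

Lemma Sform_mul (F : fieldType) n (s : F) (M N : 'M[F]_2) :
  Sform n s M -> Sform n s N -> Sform n s (M * N).
Proof.
have -> : M * N = mk2 (M 0 0 * N 0 0 + M 0 1 * N 1 0) (M 0 0 * N 0 1 + M 0 1 * N 1 1)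
   (M 1 0 * N 0 0 + M 1 1 * N 1 0) (M 1 0 * N 0 1 + M 1 1 * N 1 1).
  by rewrite {1}(mx2_eta M) {1}(mx2_eta N) mul_mk2.
rewrite /Sform !mk2E.
move: (M 0 0) (M 0 1) (M 1 0) (M 1 1) (N 0 0) (N 0 1) (N 1 0) (N 1 1) => a b c d a' b' c' d'.
case=> [[b0 [c0 [had ha]]] | [a0 [d0 [hbc hc]]]];
  case=> [[b0' [c0' [had' ha']]] | [a0' [d0' [hbc' hc']]]].
- subst b c b' c'; left; rewrite !mul0r !mulr0 !addr0 !add0r; do !split.
    transitivity ((a * d) * (a' * d')); first ring.
    by rewrite had had' mulr1.
  by rewrite exprMn ha ha' mulr1.
- subst b c a' d'; right; rewrite !mul0r !mulr0 !addr0 !add0r; do !split.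
    transitivity ((a * d) * (b' * c')); first ring.
    by rewrite had hbc' mulr1.
  have hd : d ^+ n = 1 by rewrite -(mul1r (d ^+ n)) -{1}ha -exprMn had expr1n.
  transitivity (d ^+ n * (c' * s) ^+ n); first by rewrite -exprMn mulrA.
  by rewrite hd hc' mulr1.
- subst a d b' c'; right; rewrite !mul0r !mulr0 !addr0 !add0r; do !split.
    transitivity ((b * c) * (a' * d')); first ring.
    by rewrite hbc had' mulr1.
  transitivity ((c * s) ^+ n * a' ^+ n); first by rewrite -exprMn; congr (_ ^+ n); ring.
  by rewrite hc ha' mulr1.
- subst a d a' d'; left; rewrite !mul0r !mulr0 !addr0 !add0r; do !split.
    transitivity ((b * c) * (b' * c')); first ring.
    by rewrite hbc hbc' mulr1.
  transitivity ((b * c') ^+ n * (c * s) ^+ n); first by rewrite hc mulr1.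
  rewrite -exprMn; transitivity (((b * c) * (c' * s)) ^+ n); first by congr (_ ^+ n); ring.
  by rewrite exprMn hbc hc' expr1n mul1r.
Qed.

Lemma main_gen (F : finFieldType) (f : {poly F}) (n : nat) (s z : F) :
  (1 < n)%N -> n.-primitive_root z -> s != 0 ->
  (forall u : {'GL_2[F]}, u \in aut_set f <-> Sform n s (GLval u)) ->
  (aut_set f \isog 'D_(n.*2))%g.
Proof.
move=> n1 pz sn0 autP.
have zn0 : z != 0 by rewrite (prim_root_eq0 pz) -lt0n ltnW.
have zs0 : z^-1 * s != 0 by rewrite mulf_neq0 ?invr_eq0.
have hdx : \det (mk2 0 s s^-1 0) != 0.
  by rewrite det_mk2 mul0r sub0r oppr_eq0 mulfV ?oner_neq0.
have hdy : \det (mk2 0 (z^-1 * s) (z^-1 * s)^-1 0) != 0.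
  by rewrite det_mk2 mul0r sub0r oppr_eq0 mulfV ?oner_neq0.
pose x := mkGL hdx; pose y := mkGL hdy.
have vx : GLval x = mk2 0 s s^-1 0 by [].
have vy : GLval y = mk2 0 (z^-1 * s) (z^-1 * s)^-1 0 by [].
have vxy : GLval (x * y)%g = mk2 z 0 0 z^-1.
  rewrite GL_ME vx vy mul_mk2 !mul0r !mulr0 !add0r !addr0 invfM invrK.
  by congr mk2; rewrite mulrCA ?mulfV ?mulVf // mulr1.
have gA : group_set (aut_set f).
  apply/group_setP; split.
    apply/autP; rewrite GL_1E id2 /Sform !mk2E; left; rewrite mulr1 expr1n; do !split.
  move=> u v /autP Hu /autP Hv; apply/autP; rewrite GL_ME; exact: Sform_mul.
pose A := Group gA.
have hpow : forall k, GLval ((x * y) ^+ k)%g = mk2 (z ^+ k) 0 0 (z^-1 ^+ k).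
  elim=> [|k IH]; first by rewrite expg0 GL_1E id2 !expr0.
  by rewrite expgS GL_ME IH vxy mul_mk2 !exprS; congr mk2; ring.
have oxy : #[(x * y)%g]%g = n.
  apply/eqP; rewrite eqn_dvd; apply/andP; split.
    rewrite order_dvdn; apply/eqP; apply: GL_inj.
    by rewrite hpow GL_1E id2 exprVn (prim_expr_order pz) invr1.
  rewrite (prim_order_dvd pz).
  move/(congr1 (fun u : {'GL_2[F]} => GLval u 0 0)): (expg_order (x * y)%g).
  by rewrite hpow GL_1E id2 !mk2E => ->.
have hsq : forall b : F, b != 0 -> mk2 0 b b^-1 0 * mk2 0 b b^-1 0 = 1.
  move=> b bn0; rewrite mul_mk2 !mul0r !mulr0 !add0r !addr0 mulfV // mulVf //.
  by rewrite id2.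
have hne1 : forall (u : {'GL_2[F]}), GLval u 0 0 = 0 -> u != 1%g.
  move=> u h0; apply/eqP => h1; move: h0; rewrite h1 GL_1E id2 !mk2E.
  by move/eqP; rewrite oner_eq0.
have ox : #[x]%g = 2%N.
  apply: order2; first by apply: hne1; rewrite vx !mk2E.
  by apply: GL_inj; rewrite expgS expg1 GL_ME vx hsq.
have oy : #[y]%g = 2%N.
  apply: order2; first by apply: hne1; rewrite vy !mk2E.
  by apply: GL_inj; rewrite expgS expg1 GL_ME vy hsq.
have nxy : x != y.
  apply/eqP => h; move/(congr1 (fun u : {'GL_2[F]} => GLval u 0 1)): h.
  rewrite vx vy !mk2E => e.
  have z1 : z ^+ 1 = 1.
    have : z^-1 = 1 by apply: (mulIf sn0); rewrite -e mul1r.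
    by move/(congr1 (fun w => w^-1)); rewrite invrK invr1 expr1.
  move: n1; rewrite ltnNge; move/negP; apply.
  by apply: dvdn_leq => //; rewrite (prim_order_dvd pz) z1.
have Sx : Sform n s (GLval x).
  by rewrite vx /Sform !mk2E; right; rewrite mulfV // mulVf // expr1n; do !split.
have Sy : Sform n s (GLval y).
  rewrite vy /Sform !mk2E; right; rewrite mulfV //; do !split.
  by rewrite invfM invrK -mulrA mulVf // mulr1 (prim_expr_order pz).
have xyG : (x * y)%g \in <<[set x; y]>>%g by rewrite groupM ?mem_gen ?set21 ?set22.
have xG : x \in <<[set x; y]>>%g by rewrite mem_gen ?set21.
have hsub : aut_set f = <<[set x; y]>>%g.
  apply/eqP; rewrite eqEsubset; apply/andP; split; last first.
    change (<<[set x; y]>> \subset A)%g.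
    rewrite gen_subG subUset !sub1set; apply/andP; split; apply/autP => //.
  apply/subsetP => u /autP; rewrite /Sform.
  case=> [[b0 [c0 [had ha]]] | [a0 [d0 [hbc hc]]]].
    have [k hk] := prim_rootP pz ha.
    suff -> : u = ((x * y) ^+ k)%g by rewrite groupX.
    apply: GL_inj; rewrite hpow (mx2_eta (GLval u)) b0 c0 hk; congr mk2.
    have hu0 : GLval u 0 0 != 0 by apply: contraNneq (oner_neq0 F) => h; rewrite -had h mul0r.
    by rewrite exprVn -hk; apply: (mulfI hu0); rewrite had mulfV.
  have [k hk] := prim_rootP pz hc.
  suff -> : u = (x * (x * y) ^+ k)%g by rewrite groupM ?groupX.
  apply: GL_inj; rewrite GL_ME vx hpow (mx2_eta (GLval u)) a0 d0 mul_mk2.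
  rewrite !mul0r !mulr0 !add0r !addr0.
  have hc' : GLval u 1 0 = s^-1 * z ^+ k by rewrite -hk mulrCA mulVf // mulr1.
  have hu10 : GLval u 1 0 != 0 by rewrite hc' mulf_neq0 ?invr_eq0 ?expf_neq0.
  congr mk2; last by [].
  apply: (mulIf hu10); rewrite hbc hc' exprVn mulrACA mulfV // mulVf ?expf_neq0 //.
  by rewrite mulr1.
rewrite hsub.
have := involutions_gen_dihedral ox oy nxy.
by rewrite /= card_inv_gen // oxy.
Qed.

Lemma natf_neq0 (F : finFieldType) p : prime p -> ~~ (p %| #|F|)%N -> p%:R != 0 :> F.
Proof.
move=> pp; apply: contra => /eqP p0.
have [q qp hq] := finPcharP F.
have qp' : (q %| p)%N by rewrite (dvdn_pcharf hq) p0.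
have eqp : q = p by apply/eqP; rewrite -dvdn_prime2.
subst q.
have hc : #|F| = (p ^ logn p #|F|)%N := card_pprimeChar hq.
move: hc; case: (logn p #|F|) => [|m] hc.
  by have := finNzRing_gt1 F; rewrite hc.
by rewrite hc dvdn_exp.
Qed.

Lemma prim_exists (F : finFieldType) m : (0 < m)%N -> (m %| #|F|.-1)%N ->
  exists z : F, m.-primitive_root z.
Proof.
move=> m0 hm.
have F1 := finNzRing_gt1 F.
have N0 : (0 < #|F|.-1)%N by rewrite -ltnS prednK // ltnW.
have : has #|F|.-1.-primitive_root (enum (predC1 (0 : F))).
  apply: has_prim_root => //.
  - apply/allP => x; rewrite mem_enum inE => xn0; rewrite unity_rootE.
    apply/eqP; apply: (mulIf xn0); rewrite -exprSr prednK ?expf_card ?mul1r //.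
    exact: ltnW.
  - exact: enum_uniq.
  - by rewrite -cardE cardC1.
case/hasP => z _ pz.
by exists (z ^+ (#|F|.-1 %/ m)); apply: dvdn_prim_root.
Qed.

Theorem mainTheorem1 :
  (forall (F : finFieldType) (t : F),
      odd #|F| ->
      t != 0 -> t != 4%:R^-1 -> t != 9%:R / 100%:R ->
      (4 %| #|F|.-1)%N ->
      (exists s : F, s ^+ 4 = t) ->
      (aut_set ('X^5 + 'X^3 + t *: 'X : {poly F}) \isog 'D_8)%g)
  /\
  (forall (F : finFieldType) (t : F),
      odd #|F| -> ~~ (3 %| #|F|)%N ->
      t != 0 -> t != 4%:R^-1 -> t != - 1 / 50%:R ->
      (3 %| #|F|.-1)%N ->
      (exists s : F, s ^+ 6 = t) ->
      (aut_set ('X^6 + 'X^3 + t%:P : {poly F}) \isog 'D_12)%g).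
Proof.
split.
  move=> F t oddF ht ht4 ht9 h4 [s hs].
  have h2 : (2%:R : F) != 0 by apply: natf_neq0 => //; rewrite dvdn2 oddF.
  have e4 : (4%:R : F) = 2%:R * 2%:R by ring.
  have h4' : (4%:R : F) != 0 by rewrite e4 mulf_neq0.
  have ht4' : 4%:R * t - 1 != 0.
    apply: contra ht4 => /eqP h; apply/eqP; apply: (mulfI h4'); rewrite mulfV //.
    by apply/eqP; rewrite -subr_eq0 h.
  have ht9' : 100%:R * t - 9%:R != 0.
    apply: contra ht9 => /eqP h.
    have h100 : (100%:R : F) != 0.
      apply/eqP => h0; move: h; rewrite h0 mul0r sub0r => /eqP; rewrite oppr_eq0 => /eqP h9.
      have := oner_neq0 F; rewrite (_ : (1 : F) = 100%:R - 11%:R * 9%:R); last by ring.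
      by rewrite h0 h9 mulr0 subrr eqxx.
    apply/eqP; apply: (mulfI h100); rewrite mulrCA mulfV // mulr1.
    by apply/eqP; rewrite -subr_eq0 h.
  have sn0 : s != 0 by apply: contraNneq ht => s0; rewrite -hs s0 expr0n.
  have [z pz] := prim_exists (isT : (0 < 4)%N) h4.
  apply: (@main_gen _ _ 4 s z) => // u; split.
    move/(aut_setP (act1 _ _) (f1E _)); rewrite det2 => E.
    by apply: (core_i h2 ht ht4' ht9' hs _ E); have := GL_det u; rewrite det2.
  by move=> hS; apply/(aut_setP (act1 _ _) (f1E _)); rewrite det2; apply: conv_i hs hS.
move=> F t oddF n3 ht ht4 ht50 h3 [s hs].
have h2 : (2%:R : F) != 0 by apply: natf_neq0 => //; rewrite dvdn2 oddF.
have h3' : (3%:R : F) != 0 by apply: natf_neq0.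
have e4 : (4%:R : F) = 2%:R * 2%:R by ring.
have h4' : (4%:R : F) != 0 by rewrite e4 mulf_neq0.
have ht4' : 4%:R * t - 1 != 0.
  apply: contra ht4 => /eqP h; apply/eqP; apply: (mulfI h4'); rewrite mulfV //.
  by apply/eqP; rewrite -subr_eq0 h.
have ht50' : 50%:R * t + 1 != 0.
  apply: contra ht50 => /eqP h.
  have h50 : (50%:R : F) != 0.
    apply/eqP => h0; move: h; rewrite h0 mul0r add0r => /eqP.
    by rewrite oner_eq0.
  apply/eqP; apply: (mulfI h50); rewrite mulrCA mulfV // mulr1.
  by apply/eqP; rewrite -subr_eq0 opprK h.
have sn0 : s != 0 by apply: contraNneq ht => s0; rewrite -hs s0 expr0n.
have hF : (0 < #|F|)%N by apply/card_gt0P; exists 0.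
have h2d : (2 %| #|F|.-1)%N by rewrite dvdn2 -oddS prednK.
have h6 : (6 %| #|F|.-1)%N by rewrite (@Gauss_dvd 2 3) ?h2d ?h3.
have [z pz] := prim_exists (isT : (0 < 6)%N) h6.
apply: (@main_gen _ _ 6 s z) => // u; split.
  move/(aut_setP (act2 _ _) (f2E _)); rewrite det2 => E.
  by apply: (core_ii h2 h3' ht ht4' ht50' hs _ E); have := GL_det u; rewrite det2.
by move=> hS; apply/(aut_setP (act2 _ _) (f2E _)); rewrite det2; apply: conv_ii hs hS.
Qed.
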